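(* Let $V$ be a topological real vector space and $C$ a cone in $V$. Assume $X_1,\dots,X_m,Y_1,\dots,Y_n$ are nonempty $C$-antichain-convex subsets of $V$, and put $X=X_1+\dots+X_m$ and $Y=Y_1+\dots+Y_n$. Suppose $\operatorname{int}(X)\neq\emptyset$ and $\operatorname{int}(X)\cap Y=\emptyset$. (1) If $X_1$ is $C$-upward, then $X$ and $Y$ are separated. (2) If $X_1$ is $C$-downward, then $X$ and $Y$ are separated.
   Context: A cone in $V$ is a subset $C$ with $\lambda C\subseteq C$ for all $\lambda>0$ (possibly empty, need not contain $0$). $S\subseteq V$ is $C$-antichain-convex iff for all $x,y\in S$ and $\lambda\in[0,1]$ with $y-x\notin C\cup(-C)$ one has $\lambda x+(1-\lambda)y\in S$. $S$ is $C$-upward iff $S+C\subseteq S$; $C$-downward iff $S-C\subseteq S$. Sums are Minkowski sums. $V^*$ is the space of continuous linear functionals on $V$. $X$ and $Y$ are separated iff there is $f\in V^*\setminus\{0\}$ with $\sup f[X]\le\inf f[Y]$. *)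

(* Defs.v *)
From HB Require Import structures.
From mathcomp Require Import all_boot all_order all_algebra.
From mathcomp Require Import all_classical all_reals all_analysis.
Set Implicit Arguments. Unset Strict Implicit. Unset Printing Implicit Defensive.
Import Order.TTheory GRing.Theory Num.Theory.
Local Open Scope classical_set_scope.
Local Open Scope ring_scope.

(* A cone: lambda C `<=` C for all lambda > 0 (possibly empty, need not contain 0). *)
Definition is_cone (R : realType) (V : lmodType R) (C : set V) : Prop :=
  forall (l : R) (c : V), 0 < l -> C c -> C (l *: c).

Definition antichain_convex (R : realType) (V : lmodType R) (C S : set V) : Prop :=
  forall (x y : V) (l : R), S x -> S y -> 0 <= l <= 1 ->
    ~ (C (y - x) \/ [set - c | c in C] (y - x)) ->
    S (l *: x + (1 - l) *: y).

Definition upward (R : realType) (V : lmodType R) (C S : set V) : Prop :=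
  [set s + c | s in S & c in C] `<=` S.

Definition downward (R : realType) (V : lmodType R) (C S : set V) : Prop :=
  [set s - c | s in S & c in C] `<=` S.

Definition minksum2 (R : realType) (V : lmodType R) (A B : set V) : set V :=
  [set a + b | a in A & b in B].

(* Minkowski sum X 0 + X 1 + ... + X (k-1)  (empty sum = [set 0]) *)
Fixpoint minksum (R : realType) (V : lmodType R) (X : nat -> set V) (k : nat) : set V :=
  match k with
  | 0%N => [set 0]
  | k'.+1 => minksum2 (minksum X k') (X k')
  end.

Definition lin_separated (R : realType) (V : topologicalLmodType R) (X Y : set V) : Prop :=
  exists f : {linear V -> R^o},
    continuous (f : V -> R^o) /\ (exists v, f v != 0) /\
    (ereal_sup [set (f x)%:E | x in X] <= ereal_inf [set (f y)%:E | y in Y])%E.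

(* Main.v *)
Require Import Defs.
From HB Require Import structures.
From mathcomp Require Import all_boot all_order all_algebra.
From mathcomp Require Import all_classical all_reals all_analysis.
From mathcomp Require Import lra.
Import Order.TTheory GRing.Theory Num.Theory.
Local Open Scope classical_set_scope.
Local Open Scope ring_scope.
Set Implicit Arguments. Unset Strict Implicit. Unset Printing Implicit Defensive.
Lemma E1 (R : realType) (V : lmodType R) (l : R) (x y : V) :
  l *: x + (1 - l) *: y = x + (1 - l) *: (y - x).
Proof.
by rewrite scalerBr [(1 - l) *: x]scalerBl scale1r opprB [RHS]addrCA [x + (_ - _)]addrC subrK addrC.
Qed.

Lemma E2 (R : realType) (V : lmodType R) (l : R) (x y : V) :
  l *: x + (1 - l) *: y = y + l *: (x - y).
Proof.
have h : 1 - (1 - l) = l by rewrite opprB addrCA subrr addr0.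
by have := E1 (1 - l) y x; rewrite h => <-; rewrite addrC.
Qed.

Lemma E3 (R : realType) (V : lmodType R) (l : R) (a b a' b' : V) :
  l *: (a + b) + (1 - l) *: (a' + b') =
  (l *: a + (1 - l) *: a') + (l *: b + (1 - l) *: b').
Proof. by rewrite !scalerDr addrACA. Qed.

Lemma E4 (R : realType) (V : lmodType R) (l : R) (a b a' b' : V) :
  l *: (a - b) + (1 - l) *: (a' - b') =
  (l *: a + (1 - l) *: a') - (l *: b + (1 - l) *: b').
Proof. by rewrite !scalerBr addrACA opprD. Qed.

Definition cvx (R : realType) (V : lmodType R) (S : set V) : Prop :=
  forall x y l, S x -> S y -> 0 <= l <= 1 -> S (l *: x + (1 - l) *: y).

Lemma ac_decomp (R : realType) (V : lmodType R) (C B : set V) b b' l :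
  is_cone C -> antichain_convex C B -> B b -> B b' -> 0 <= l <= 1 ->
  B (l *: b + (1 - l) *: b') \/
  exists b1 b2 d1 d2, [/\ B b1, B b2, C d1, C d2 &
     l *: b + (1 - l) *: b' = b1 + d1 /\ l *: b + (1 - l) *: b' = b2 - d2].
Proof.
move=> Ccone Bac Bb Bb' /andP[l0 l1].
have [->|ln1] := eqVneq l 1; first by left; rewrite subrr scale0r addr0 scale1r.
have [->|ln0] := eqVneq l 0; first by left; rewrite subr0 scale0r add0r scale1r.
have lp : 0 < l by rewrite lt_neqAle eq_sym ln0.
have lq : 0 < 1 - l by rewrite subr_gt0 lt_neqAle ln1.
case: (pselect (C (b' - b) \/ [set - c | c in C] (b' - b))) =>
    [[Cc|[c Cc e]]|nC]; last by left; apply: Bac => //; rewrite l0 l1.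
- right; exists b, b', ((1 - l) *: (b' - b)), (l *: (b' - b)); split.
  + by [].
  + by [].
  + exact: Ccone.
  + exact: Ccone.
  + split; first exact: E1.
    by rewrite E2 -scalerN opprB.
- right; exists b', b, (l *: c), ((1 - l) *: c); split.
  + by [].
  + by [].
  + exact: Ccone.
  + exact: Ccone.
  + split.
      by rewrite E2; congr (_ + _ *: _); rewrite -opprB -e opprK.
    by rewrite E1 -e scalerN.
Qed.

Lemma up_cvx (R : realType) (V : lmodType R) (C A : set V) :
  is_cone C -> upward C A -> antichain_convex C A -> cvx A.
Proof.
move=> Ccone Aup Aac x y l Ax Ay hl.
case: (ac_decomp Ccone Aac Ax Ay hl) => [//|[b1 [b2 [d1 [d2 [A1 A2 C1 C2 [-> _]]]]]]].
by apply: Aup; exists b1 => //; exists d1.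
Qed.

Lemma sum_cvx (R : realType) (V : lmodType R) (C A B : set V) :
  is_cone C -> cvx A -> upward C A -> antichain_convex C B ->
  cvx (minksum2 A B) /\ upward C (minksum2 A B).
Proof.
move=> Ccone Acv Aup Bac; split.
  move=> _ _ l [a Aa [b Bb <-]] [a' Aa' [b' Bb' <-]] hl.
  rewrite E3.
  case: (ac_decomp Ccone Bac Bb Bb' hl) => [Bc|[b1 [b2 [d1 [d2 [B1 B2 C1 C2 [-> _]]]]]]].
    by exists (l *: a + (1 - l) *: a'); [exact: Acv|exists (l *: b + (1 - l) *: b')].
  exists (l *: a + (1 - l) *: a' + d1); last by exists b1 => //; rewrite addrAC addrA.
  by apply: Aup; exists (l *: a + (1 - l) *: a'); [exact: Acv|exists d1].
move=> _ [_ [a Aa [b Bb <-]] [c Cc <-]].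
exists (a + c); first by apply: Aup; exists a => //; exists c.
by exists b => //; rewrite addrAC.
Qed.

Lemma diff_cvx (R : realType) (V : lmodType R) (C A B : set V) :
  is_cone C -> cvx A -> upward C A -> antichain_convex C B ->
  cvx [set a - b | a in A & b in B] /\ upward C [set a - b | a in A & b in B].
Proof.
move=> Ccone Acv Aup Bac; split.
  move=> _ _ l [a Aa [b Bb <-]] [a' Aa' [b' Bb' <-]] hl.
  rewrite E4.
  case: (ac_decomp Ccone Bac Bb Bb' hl) => [Bc|[b1 [b2 [d1 [d2 [B1 B2 C1 C2 [_ ->]]]]]]].
    by exists (l *: a + (1 - l) *: a'); [exact: Acv|exists (l *: b + (1 - l) *: b')].
  exists (l *: a + (1 - l) *: a' + d2); last by exists b2 => //; rewrite opprB addrA.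
  by apply: Aup; exists (l *: a + (1 - l) *: a'); [exact: Acv|exists d2].
move=> _ [_ [a Aa [b Bb <-]] [c Cc <-]].
exists (a + c); first by apply: Aup; exists a => //; exists c.
by exists b => //; rewrite addrAC.
Qed.

Definition hgood (R : realType) (V : lmodType R) (K : set V) (w0 : V)
  (A : set (V * R)) : Prop :=
  [/\ A (w0, 1),
      (forall v a u b, A (v, a) -> A (u, b) -> A (v + u, a + b)),
      (forall t v a, A (v, a) -> A (t *: v, t * a)),
      (forall v a b, A (v, a) -> A (v, b) -> a = b) &
      (forall v a, A (v, a) -> K v -> 0 <= a)].

Lemma hb_step (R : realType) (V : lmodType R) (K : set V) (w0 : V)
  (A : set (V * R)) (x : V) :
  (forall x y, K x -> K y -> K (x + y)) ->
  (forall t x, 0 < t -> K x -> K (t *: x)) ->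
  (forall x, exists2 e, 0 < e & K (w0 + e *: x)) ->
  hgood K w0 A -> ~ (exists a, A (x, a)) ->
  exists B, hgood K w0 B /\ A `<` B.
Proof.
move=> Kadd Kscale Kint [Aw0 Aadd Ascale Afun Apos] nx.
have A00 : A (0, 0) by have := Ascale 0 _ _ Aw0; rewrite scale0r mul0r.
have key : forall v a u b t s, A (v, a) -> A (u, b) ->
    v + t *: x = u + s *: x -> t = s.
  move=> v a u b t s Ava Aub e; apply: contrapT => /eqP ts; apply: nx.
  have ts0 : t - s != 0 by rewrite subr_eq0.
  have e2 : (t - s) *: x = u - v.
    by rewrite scalerBl -[t *: x](addKr v) e addrA addrK addrC.
  have Auv : A (u - v, b - a).
    by have := Aadd _ _ _ _ Aub (Ascale (-1) _ _ Ava); rewrite scaleN1r mulN1r.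
  exists ((t - s)^-1 * (b - a)).
  have := Ascale ((t - s)^-1) _ _ Auv.
  by rewrite -e2 scalerA mulVf // scale1r.
pose L := [set r | exists v a, [/\ A (v, a), K (v + x) & r = - a]].
pose U := [set r | exists v, A (v, r) /\ K (v - x)].
have LU : forall l u, L l -> U u -> l <= u.
  move=> l u [v [a [Ava Kvx ->]]] [w [Awu Kwx]].
  have := Apos _ _ (Aadd _ _ _ _ Ava Awu).
  have -> : v + w = (v + x) + (w - x) by rewrite addrACA subrr addr0.
  by move=> /(_ (Kadd _ _ Kvx Kwx)) h; lra.
have [l0 Ll0] : L !=set0.
  have [e e0 Ke] := Kint x.
  exists (- (e^-1 * 1)), (e^-1 *: w0), (e^-1 * 1); split => //.
    exact: Ascale.
  have := Kscale _ _ (ltac:(by rewrite invr_gt0) : 0 < e^-1) Ke.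
  by rewrite scalerDr scalerA mulVf ?gt_eqF // scale1r.
have [u0 Uu0] : U !=set0.
  have [e e0 Ke] := Kint (- x).
  exists (e^-1 * 1), (e^-1 *: w0); split.
    exact: Ascale.
  have := Kscale _ _ (ltac:(by rewrite invr_gt0) : 0 < e^-1) Ke.
  by rewrite scalerDr scalerA mulVf ?gt_eqF // scale1r.
pose c := sup L.
have Lc : forall l, L l -> l <= c.
  move=> l Ll; apply: sup_upper_bound => //; split; first by exists l0.
  by exists u0 => r Lr; exact: LU.
have cU : forall u, U u -> c <= u.
  by move=> u Uu; apply: ge_sup; [exists l0 | move=> r Lr; exact: LU].
pose B := [set p | exists v a t, A (v, a) /\ p = (v + t *: x, a + t * c)].
exists B; split; last first.
  split.
    by move=> [v a] Ava; exists v, a, 0; rewrite scale0r mul0r !addr0.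
  move=> /(_ (x, c)) h; apply: nx; exists c; apply: h.
  by exists 0, 0, 1; rewrite scale1r mul1r !add0r.
split.
- by exists w0, 1, 0; rewrite scale0r mul0r !addr0.
- move=> _ _ _ _ [v1 [a1 [t1 [A1 [-> ->]]]]] [v2 [a2 [t2 [A2 [-> ->]]]]].
  exists (v1 + v2), (a1 + a2), (t1 + t2); split; first exact: Aadd.
  by rewrite scalerDl mulrDl addrACA [a1 + _ + _]addrACA.
- move=> s _ _ [v [a [t [Ava [-> ->]]]]].
  exists (s *: v), (s * a), (s * t); split; first exact: Ascale.
  by rewrite scalerDr scalerA mulrDr mulrA.
- move=> p a1 a2 [v1 [b1 [t1 [A1 [e1 ->]]]]] [v2 [b2 [t2 [A2 [e2 ->]]]]].
  have ev : v1 + t1 *: x = v2 + t2 *: x by rewrite -e1 -e2.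
  have tt := key _ _ _ _ _ _ A1 A2 ev; subst t2.
  have vv : v1 = v2 by move/addIr: ev.
  by rewrite -vv in A2; rewrite (Afun _ _ _ A1 A2).
- move=> _ _ [v [a [t [Ava [-> ->]]]]] Kv.
  have [t0|t0|t0] := ltgtP t 0; last first.
    by move: Kv; rewrite t0 scale0r mul0r !addr0; exact: Apos.
  + have := Kscale _ _ (ltac:(by rewrite invr_gt0) : 0 < t^-1) Kv.
    rewrite scalerDr scalerA mulVf ?gt_eqF // scale1r => Kv'.
    have hL : L (- (t^-1 * a)).
      by exists (t^-1 *: v), (t^-1 * a); split => //; exact: Ascale.
    have := Lc _ hL => h.
    have hh : t * (- (t^-1 * a)) <= t * c by rewrite ler_pM2l.
    rewrite mulrN mulrA mulfV ?gt_eqF // mul1r in hh; lra.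
  +
    have nt0 : 0 < - t by rewrite oppr_gt0.
    have := Kscale _ _ (ltac:(by rewrite invr_gt0) : 0 < (- t)^-1) Kv.
    rewrite scalerDr scalerA => Kv'.
    have hU : U ((- t)^-1 * a).
      exists ((- t)^-1 *: v); split; first exact: Ascale.
      by move: Kv'; rewrite invrN mulNr mulVf ?lt_eqF // scaleN1r.
    have := cU _ hU => h.
    have hh : - t * c <= - t * ((- t)^-1 * a) by rewrite ler_pM2l.
    rewrite mulrA mulfV ?gt_eqF // mul1r in hh; lra.
Qed.

Lemma hb_cone (R : realType) (V : lmodType R) (K : set V) (w0 : V) :
  (forall x y, K x -> K y -> K (x + y)) ->
  (forall t x, 0 < t -> K x -> K (t *: x)) ->
  ~ K 0 -> K w0 ->
  (forall x, exists2 e, 0 < e & K (w0 + e *: x)) ->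
  exists f : V -> R, (forall a x y, f (a *: x + y) = a * f x + f y) /\
    f w0 = 1 /\ (forall k, K k -> 0 <= f k).
Proof.
move=> Kadd Kscale K0 Kw0 Kint.
pose P (A : set (V * R)) := A !=set0 -> hgood K w0 A.
have [A [PA Amax]] : exists A, P A /\ forall B, A `<` B -> ~ P B.
  apply: Zorn_bigcup => F FP Ftot [p0 [X0 FX0 X0p0]].
  have two : forall p q, (\bigcup_(X in F) X) p -> (\bigcup_(X in F) X) q ->
      exists2 X, F X & [/\ X p, X q & hgood K w0 X].
    move=> p q [X FX Xp] [Y FY Yq].
    have [XY|YX] := Ftot _ _ FX FY.
      by exists Y => //; split => //; [exact: XY | apply: FP => //; exists q].
    by exists X => //; split => //; [exact: YX | apply: FP => //; exists p].
  split.
  - have [] := FP _ FX0 (ex_intro _ _ X0p0) => Xw0 _ _ _ _.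
    by exists X0.
  - move=> v a u b Hva Hub; have [X FX [Xva Xub [_ Xadd _ _ _]]] := two _ _ Hva Hub.
    by exists X => //; exact: Xadd.
  - move=> t v a Hva; have [X FX [Xva _ [_ _ Xsc _ _]]] := two _ _ Hva Hva.
    by exists X => //; exact: Xsc.
  - move=> v a b Hva Hvb; have [X FX [Xva Xvb [_ _ _ Xf _]]] := two _ _ Hva Hvb.
    exact: Xf Xva Xvb.
  - move=> v a Hva Kv; have [X FX [Xva _ [_ _ _ _ Xp]]] := two _ _ Hva Hva.
    exact: Xp Xva Kv.
have A0 : A !=set0.
  apply: contrapT => nA.
  have Ae : A = set0 by apply/seteqP; split => // p Ap; apply: nA; exists p.
  pose B0 := [set p | exists t, p = (t *: w0, t)].
  apply: (Amax B0).
    rewrite Ae; split => // /(_ (w0, 1)) h.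
    by apply: h; exists 1; rewrite scale1r.
  move=> _; split.
  - by exists 1; rewrite scale1r.
  - by move=> v a u b [t [-> ->]] [s [-> ->]]; exists (t + s); rewrite scalerDl.
  - by move=> s v a [t [-> ->]]; exists (s * t); rewrite scalerA.
  - move=> v a b [t [-> ->]] [s [e ->]].
    have /eqP : (t - s) *: w0 = 0 by rewrite scalerBl e subrr.
    rewrite scaler_eq0 subr_eq0 => /orP[/eqP //|/eqP w00].
    by move: Kw0; rewrite w00.
  - move=> v a [t [-> ->]] Kt; rewrite leNgt; apply/negP => t0.
    apply: K0.
    have Kmw : K (- w0).
      have := Kscale _ _ (ltac:(by rewrite invr_gt0 oppr_gt0) : 0 < (- t)^-1) Kt.
      by rewrite scalerA invrN mulNr mulVf ?lt_eqF // scaleN1r.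
    by have := Kadd _ _ Kw0 Kmw; rewrite subrr.
have gA := PA A0.
have tot : forall x, exists a, A (x, a).
  move=> x; apply: contrapT => nx.
  have [B [gB AB]] := hb_step Kadd Kscale Kint gA nx.
  by apply: (Amax B AB) => _.
case: gA => Aw0 Aadd Ascale Afun Apos.
pose f x := projT1 (cid (tot x)).
have fP : forall x, A (x, f x) by move=> x; rewrite /f; case: cid.
exists f; split; last split.
- move=> a x y; apply: (Afun (a *: x + y)); first exact: fP.
  by apply: Aadd; [exact: Ascale|exact: fP].
- exact: Afun (fP w0) Aw0.
- by move=> k Kk; exact: Apos (fP k) Kk.
Qed.

Lemma aff_cont (R : realType) (V : topologicalLmodType R) (mu : R) (v : V) :
  continuous (fun z : V => mu *: z + v).
Proof.
move=> z.
apply: (@continuous_comp _ _ _ (fun z : V => mu *: z) (fun w => w + v)).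
  apply: (@continuous_comp V (R^o * V)%type V (fun z => (mu, z))
    (fun p => p.1 *: p.2)); last exact: scale_continuous.
  by apply: (@cvg_pair _ _ _ _ (nbhs (mu : R^o))); [exact: cvg_cst|exact: cvg_id].
apply: (@continuous_comp V (V * V)%type V (fun w => (w, v))
  (fun p => p.1 + p.2)); last exact: add_continuous.
by apply: cvg_pair; [exact: cvg_id|exact: cvg_cst].
Qed.

Lemma aff_nbhs (R : realType) (V : topologicalLmodType R) (mu : R) (v z : V)
  (B : set V) : nbhs (mu *: z + v) B -> nbhs z [set t | B (mu *: t + v)].
Proof. by move=> hB; have := @aff_cont R V mu v z _ hB. Qed.

Lemma line_cont (R : realType) (V : topologicalLmodType R) (x v : V) :
  continuous (fun e : R^o => e *: x + v).
Proof.
move=> e.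
have h1 : {for e, continuous (fun e : R^o => e *: x)}.
  apply: (@continuous_comp (R^o) (R^o * V)%type V (fun e => (e, x))
    (fun p => p.1 *: p.2)); last exact: scale_continuous.
  by apply: (@cvg_pair _ _ _ _ (nbhs e)); [exact: cvg_id|exact: cvg_cst].
have h2 : {for (e *: x), continuous (fun w : V => w + v)}.
  apply: (@continuous_comp V (V * V)%type V (fun w => (w, v))
  (fun p => p.1 + p.2)); last exact: add_continuous.
  by apply: cvg_pair; [exact: cvg_id|exact: cvg_cst].
exact: (continuous_comp h1 h2).
Qed.

Lemma line_nbhs (R : realType) (V : topologicalLmodType R) (x v : V)
  (B : set V) : nbhs v B -> exists2 e : R, 0 < e & B (e *: x + v).
Proof.
move=> hB.
have hc := @line_cont R V x v 0.
have : nbhs ((0 : R^o) *: x + v) B by rewrite scale0r add0r.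
move=> /hc /nbhs_ballP [r r0 hr].
exists (r / 2); first by rewrite divr_gt0.
apply: (hr (r / 2)).
rewrite /ball /= sub0r normrN ger0_norm ?divr_ge0 ?ltW //.
by rewrite ltr_pdivrMr // ltr_pMr // ltr1n.
Qed.

Definition mklin (R : realType) (V : lmodType R) (f : V -> R^o)
  (Hf : forall a x y, f (a *: x + y) = a * f x + f y) : {linear V -> R^o} :=
  HB.pack f (GRing.isLinear.Build _ _ _ _ f Hf).

Lemma arith_aux (R : realType) (fy fx fa D l d : R) : 0 < d -> d = fy - fx ->
  0 < l * d -> l * d + l * D = d -> l * fa - l * fx <= l * D - l ->
  fy <= l * fa + (1 - l) * fx -> 0 < l -> False.
Proof. move=> *; nra. Qed.

Lemma main_up (R : realType) (V : topologicalLmodType R) (C : set V)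
  (m n : nat) (X Y : nat -> set V) :
  is_cone C -> (0 < m)%N -> (0 < n)%N ->
  (forall i, (i < m)%N -> X i !=set0 /\ antichain_convex C (X i)) ->
  (forall j, (j < n)%N -> Y j !=set0 /\ antichain_convex C (Y j)) ->
  (minksum X m)° !=set0 ->
  (minksum X m)° `&` minksum Y n = set0 ->
  upward C (X 0%N) -> lin_separated (minksum X m) (minksum Y n).
Proof.
move=> Ccone m0 n0 HX HY [a0 Ia0] disj Xup.
have [Scv Sup] : cvx (minksum X m) /\ upward C (minksum X m).
  suff : forall k, (0 < k)%N -> (k <= m)%N ->
      cvx (minksum X k) /\ upward C (minksum X k) by apply.
  elim=> [//|k IH] _ km; case: k IH km => [|k] IH km.
    have e : minksum X 1 = X 0%N.
      rewrite /= /minksum2; apply/seteqP; split.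
        by move=> _ [_ -> [x Xx <-]]; rewrite add0r.
      by move=> x Xx; exists 0 => //; exists x => //; rewrite add0r.
    rewrite e; split => //; exact: up_cvx Ccone Xup (HX 0%N m0).2.
  have [cv up] := IH isT (ltnW km).
  exact: sum_cvx Ccone cv up (HX _ km).2.
set S := minksum X m in Scv Sup Ia0 disj *.
set Y' := minksum Y n in disj *.
have Sint : forall a x l, S° a -> S x -> 0 < l <= 1 ->
    S° (l *: a + (1 - l) *: x).
  move=> a x l Ia Sx /andP[l0 l1].
  have l0' : l != 0 by rewrite gt_eqF.
  have hc : l^-1 *: (l *: a + (1 - l) *: x) + (- (l^-1 * (1 - l))) *: x = a.
    by rewrite scalerDr !scalerA mulVf // scale1r scaleNr addrK.
  have := @aff_nbhs R V (l^-1) ((- (l^-1 * (1 - l))) *: x)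
    (l *: a + (1 - l) *: x) S; rewrite hc => /(_ Ia).
  apply: filterS => z Sz.
  have -> : z = l *: (l^-1 *: z + (- (l^-1 * (1 - l))) *: x) + (1 - l) *: x.
    rewrite scalerDr !scalerA mulfV // scale1r mulrN scaleNr mulrA mulfV // mul1r.
    by rewrite subrK.
  by apply: Scv => //; rewrite l1 ltW.
have Iup : upward C S°.
  move=> _ [a Ia [c Cc <-]].
  have := @aff_nbhs R V 1 (- c) (a + c) S; rewrite scale1r addrK => /(_ Ia).
  apply: filterS => z Sz.
  have -> : z = (1 *: z + - c) + c by rewrite scale1r subrK.
  by apply: Sup; exists (1 *: z + - c) => //; exists c.
have Icv : cvx S°.
  move=> x y l Ix Iy /andP[l0 l1].
  have [->|ln0] := eqVneq l 0; first by rewrite scale0r add0r subr0 scale1r.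
  apply: (Sint _ _ _ Ix (nbhs_singleton Iy)).
  by rewrite lt_def ln0 l0 l1.
pose T k := [set a - y | a in S° & y in minksum Y k].
have Tk : forall k, (k <= n)%N -> cvx (T k) /\ upward C (T k).
  elim=> [_|k IH kn].
    have e : T 0%N = S°.
      apply/seteqP; split; first by move=> _ [a Ia [_ -> <-]]; rewrite subr0.
      by move=> a Ia; exists a => //; exists 0 => //; rewrite subr0.
    by rewrite e.
  have [cv up] := IH (ltnW kn).
  have e : T k.+1 = [set z - b | z in T k & b in Y k].
    apply/seteqP; split.
      move=> _ [a Ia [_ [y Yy [b Yb <-]] <-]].
      by exists (a - y); [exists a => //; exists y|exists b => //; rewrite opprD addrA].
    move=> _ [_ [a Ia [y Yy <-]] [b Yb <-]].
    by exists a => //; exists (y + b); [exists y => //; exists b|rewrite opprD addrA].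
  rewrite e; exact: diff_cvx Ccone cv up (HY _ kn).2.
have [Wcv _] := Tk n (leqnn n).
have Yne : forall k, (k <= n)%N -> minksum Y k !=set0.
  elim=> [_|k IH kn]; first by exists 0.
  have [y Yy] := IH (ltnW kn); have [b Yb] := (HY _ kn).1.
  by exists (y + b); exists y => //; exists b.
have [y0 Yy0] := Yne n (leqnn n).
pose K := [set p | exists t w, [/\ 0 < t, T n w & p = t *: w]].
pose w0 := a0 - y0.
have Kadd : forall x y, K x -> K y -> K (x + y).
  move=> _ _ [t1 [w1 [t10 W1 ->]]] [t2 [w2 [t20 W2 ->]]].
  have s0 : 0 < t1 + t2 by rewrite addr_gt0.
  pose l := t1 / (t1 + t2).
  exists (t1 + t2), (l *: w1 + (1 - l) *: w2); split => //.
    apply: Wcv => //; apply/andP; split; first by rewrite divr_ge0 // ltW.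
    by rewrite /l ler_pdivrMr // mul1r lerDl ltW.
  have e1 : (t1 + t2) * l = t1 by rewrite /l mulrCA mulfV ?gt_eqF // mulr1.
  have e2 : (t1 + t2) * (1 - l) = t2 by rewrite mulrBr mulr1 e1; lra.
  by rewrite scalerDr !scalerA e1 e2.
have Kscale : forall t x, 0 < t -> K x -> K (t *: x).
  move=> s _ s0 [t [w [t0 Ww ->]]]; exists (s * t), w; split => //.
    exact: mulr_gt0.
  by rewrite scalerA.
have K0 : ~ K 0.
  move=> [t [w [t0 [a Ia [y Yy e]] /esym/eqP]]].
  rewrite scaler_eq0 gt_eqF //= -e subr_eq0 => /eqP ay.
  have : (S° `&` Y') a by split => //; rewrite ay.
  by rewrite disj.
have Kw0 : forall a y, S° a -> Y' y -> K (a - y).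
  by move=> a y Ia Yy; exists 1, (a - y); split => //; [exists a => //; exists y|rewrite scale1r].
have Kint : forall x, exists2 e, 0 < e & K (w0 + e *: x).
  move=> x; have [e e0 He] := line_nbhs x (nbhs_interior Ia0).
  exists e => //; have := Kw0 _ _ He Yy0.
  by rewrite /w0 [e *: x + a0]addrC addrAC.
have [f [flin [fw0 fpos]]] := hb_cone Kadd Kscale K0 (Kw0 _ _ Ia0 Yy0) Kint.
have f0 : f 0 = 0.
  by have := flin 1 0 0; rewrite scale1r addr0 mul1r => h; lra.
have fD : forall x y, f (x + y) = f x + f y.
  by move=> x y; rewrite -[x]scale1r flin mul1r scale1r.
have fZ : forall a x, f (a *: x) = a * f x.
  by move=> a x; rewrite -[a *: x]addr0 flin f0 addr0.
have fN : forall x, f (- x) = - f x.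
  by move=> x; rewrite -scaleN1r fZ mulN1r.
have fge : forall a y, S° a -> Y' y -> f y <= f a.
  move=> a y Ia Yy; have := fpos _ (Kw0 _ _ Ia Yy).
  by rewrite fD fN subr_ge0.
have fw0' : f a0 - f y0 = 1 by rewrite -fN -fD.
pose N := [set z | S° (1 *: z + a0) /\ S° ((-1) *: z + a0)].
have N0 : nbhs 0 N.
  apply: filterI.
    by apply: aff_nbhs; rewrite scaler0 add0r; exact: nbhs_interior.
  by apply: aff_nbhs; rewrite scaler0 add0r; exact: nbhs_interior.
have Nb : forall z, N z -> - 1 <= f z <= 1.
  move=> z [h1 h2].
  have := fge _ _ h1 Yy0; have := fge _ _ h2 Yy0.
  rewrite !fD !fZ => ha hb; apply/andP; split; lra.
have fcont : continuous (f : V -> R^o).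
  move=> x0; apply/cvgrPdist_le => eps eps0.
  have := @aff_nbhs R V (eps^-1) (- (eps^-1 *: x0)) x0 N.
  rewrite subrr => /(_ N0).
  apply: filterS => t /Nb.
  rewrite fD fN fZ fZ => /andP[h1 h2].
  have e : f t - f x0 = eps * (eps^-1 * f t - eps^-1 * f x0).
    by rewrite -mulrBr mulrA mulfV ?gt_eqF // mul1r.
  rewrite distrC ler_norml; apply/andP; split; nra.
have fS : forall x y, S x -> Y' y -> f y <= f x.
  move=> x y Sx Yy; rewrite leNgt; apply/negP => hlt.
  pose d := f y - f x; pose D := `|f a0 - f x| + 1.
  have d0 : 0 < d by rewrite subr_gt0.
  have D0 : 0 < D by rewrite ltr_pwDr.
  have qD : f a0 - f x <= D - 1 by rewrite addrK ler_norm.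
  pose l := d / (d + D).
  have dD0 : 0 < d + D by rewrite addr_gt0.
  have l0 : 0 < l by rewrite divr_gt0.
  have lD : l * (d + D) = d by rewrite /l mulrAC -mulrA mulfV ?gt_eqF // mulr1.
  have l1 : l <= 1 by rewrite ler_pdivrMr // mul1r lerDl ltW.
  have := fge _ _ (Sint _ _ l Ia0 Sx _) Yy.
  rewrite fD !fZ => /(_ _) h.
  have {}h := h (ltac:(by rewrite l0 l1)).
  have dE : d = f y - f x by [].
  have lq : l * (f a0 - f x) <= l * (D - 1) by rewrite ler_pM2l.
  have ld0 : 0 < l * d by rewrite mulr_gt0.
  rewrite mulrDr in lD; rewrite !mulrBr mulr1 in lq.
  exact: (arith_aux d0 dE ld0 lD lq h l0).
have gl : forall a x y, - f (a *: x + y) = a * - f x + - f y.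
  by move=> a x y; rewrite flin opprD mulrN.
exists (@mklin R V (fun v : V => - f v) gl).
split; [|split].
- move=> x; apply: cvgN; exact: fcont.
- by exists w0; rewrite /= /w0 fD fN fw0' oppr_eq0 oner_neq0.
- apply: ge_ereal_sup => _ [x Sx <-]; apply: le_ereal_inf_tmp => _ [y Yy <-].
  by rewrite lee_fin /= lerN2; exact: fS.
Qed.

Lemma cone_neg (R : realType) (V : lmodType R) (C : set V) :
  is_cone C -> is_cone [set - c | c in C].
Proof.
move=> Ccone l _ l0 [c Cc <-]; exists (l *: c); first exact: Ccone.
by rewrite scalerN.
Qed.

Lemma ac_neg (R : realType) (V : lmodType R) (C S : set V) :
  antichain_convex C S -> antichain_convex [set - c | c in C] S.
Proof.
move=> Sac x y l Sx Sy hl nC; apply: Sac => // -[h|h]; apply: nC.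
  by right; exists (- (y - x)); [exists (y - x)|rewrite opprK].
by left.
Qed.

Lemma down_up (R : realType) (V : lmodType R) (C S : set V) :
  downward C S -> upward [set - c | c in C] S.
Proof.
by move=> Sd _ [s Ss [_ [c Cc <-] <-]]; apply: Sd; exists s => //; exists c.
Qed.

Theorem theorem8 (R : realType) (V : topologicalLmodType R) (C : set V)
  (m n : nat) (X Y : nat -> set V) :
  is_cone C -> (0 < m)%N -> (0 < n)%N ->
  (forall i, (i < m)%N -> X i !=set0 /\ antichain_convex C (X i)) ->
  (forall j, (j < n)%N -> Y j !=set0 /\ antichain_convex C (Y j)) ->
  (minksum X m)° !=set0 ->
  (minksum X m)° `&` minksum Y n = set0 ->
  (upward C (X 0%N) -> lin_separated (minksum X m) (minksum Y n)) /\
  (downward C (X 0%N) -> lin_separated (minksum X m) (minksum Y n)).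
Proof.
move=> Ccone m0 n0 HX HY Ine disj; split.
  exact: main_up.
move=> Xd; apply: (@main_up R V [set - c | c in C]) => //.
- exact: cone_neg.
- by move=> i im; have [? ?] := HX i im; split => //; exact: ac_neg.
- by move=> j jn; have [? ?] := HY j jn; split => //; exact: ac_neg.
- exact: down_up.
Qed.
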